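(* Let $\Omega\subseteq\mathbb{R}^3$ be a domain and let $f_0\colon\Omega\to\mathbb{R}$ be a real-valued (twice differentiable) function which is inframonogenic, i.e. $\overline{\partial} f_0\overline{\partial}=0$. Then locally one has \[ f_0(x_0,x_1,x_2)=c_0(2x_0^2+x_1^2+x_2^2)+c_1x_0+c_2+h(x_1,x_2),\] where $c_0,c_1,c_2\in\mathbb{R}$ are constants and $h$ is a harmonic function of the two variables $(x_1,x_2)$.
   Context: $\mathbb{H}$ denotes the real quaternions with basis $e_0=1,e_1,e_2,e_3$ and $e_1^2=e_2^2=e_3^2=e_1e_2e_3=-1$; points of $\mathbb{R}^3$ are $x=x_0+x_1e_1+x_2e_2$. With $\partial_i=\partial/\partial x_i$, $\overline{\partial} g=\partial_0 g+e_1\partial_1 g+e_2\partial_2 g$ (left action), $g\overline{\partial}=\partial_0 g+(\partial_1 g)e_1+(\partial_2 g)e_2$ (right action), and $\overline{\partial} g\overline{\partial}:=\overline{\partial}(g\overline{\partial})$. ''Locally'' means in a suitable neighborhood of each point of $\Omega$. *)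

(* Defs.v *)
From Stdlib Require Import Reals.
From Coquelicot Require Import Coquelicot.
Open Scope R_scope.

Record quat := Q { q0 : R; q1 : R; q2 : R; q3 : R }.

Definition qzero : quat := Q 0 0 0 0.
Definition qreal (a : R) : quat := Q a 0 0 0.
Definition qe1 : quat := Q 0 1 0 0.
Definition qe2 : quat := Q 0 0 1 0.
Definition qadd (a b : quat) : quat :=
  Q (q0 a + q0 b) (q1 a + q1 b) (q2 a + q2 b) (q3 a + q3 b).
(* Hamilton product: e1 e2 = e3, e2 e3 = e1, e3 e1 = e2 *)
Definition qmul (a b : quat) : quat :=
  Q (q0 a * q0 b - q1 a * q1 b - q2 a * q2 b - q3 a * q3 b)
    (q0 a * q1 b + q1 a * q0 b + q2 a * q3 b - q3 a * q2 b)
    (q0 a * q2 b - q1 a * q3 b + q2 a * q0 b + q3 a * q1 b)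
    (q0 a * q3 b + q1 a * q2 b - q2 a * q1 b + q3 a * q0 b).

(** * Functions on R^3, points x = x0 + x1 e1 + x2 e2 written as (x0,x1,x2) *)
Definition d0 (f : R -> R -> R -> R) : R -> R -> R -> R :=
  fun x0 x1 x2 => Derive (fun t => f t x1 x2) x0.
Definition d1 (f : R -> R -> R -> R) : R -> R -> R -> R :=
  fun x0 x1 x2 => Derive (fun t => f x0 t x2) x1.
Definition d2 (f : R -> R -> R -> R) : R -> R -> R -> R :=
  fun x0 x1 x2 => Derive (fun t => f x0 x1 t) x2.

Definition qd (d : (R -> R -> R -> R) -> R -> R -> R -> R)
  (g : R -> R -> R -> quat) : R -> R -> R -> quat :=
  fun x0 x1 x2 =>
    Q (d (fun a b c => q0 (g a b c)) x0 x1 x2)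
      (d (fun a b c => q1 (g a b c)) x0 x1 x2)
      (d (fun a b c => q2 (g a b c)) x0 x1 x2)
      (d (fun a b c => q3 (g a b c)) x0 x1 x2).

Definition dbar_left (g : R -> R -> R -> quat) : R -> R -> R -> quat :=
  fun x0 x1 x2 =>
    qadd (qd d0 g x0 x1 x2)
      (qadd (qmul qe1 (qd d1 g x0 x1 x2)) (qmul qe2 (qd d2 g x0 x1 x2))).

Definition dbar_right (g : R -> R -> R -> quat) : R -> R -> R -> quat :=
  fun x0 x1 x2 =>
    qadd (qd d0 g x0 x1 x2)
      (qadd (qmul (qd d1 g x0 x1 x2) qe1) (qmul (qd d2 g x0 x1 x2) qe2)).

Definition dbar_both (g : R -> R -> R -> quat) : R -> R -> R -> quat :=
  dbar_left (dbar_right g).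

(** * Topology of R^3 (max-norm balls; same topology as Euclidean) *)
Definition ball3 (p0 p1 p2 r : R) (x0 x1 x2 : R) : Prop :=
  Rabs (x0 - p0) < r /\ Rabs (x1 - p1) < r /\ Rabs (x2 - p2) < r.

Definition open3 (U : R -> R -> R -> Prop) : Prop :=
  forall p0 p1 p2, U p0 p1 p2 ->
    exists r, 0 < r /\ forall x0 x1 x2, ball3 p0 p1 p2 r x0 x1 x2 -> U x0 x1 x2.

Definition domain3 (Om : R -> R -> R -> Prop) : Prop :=
  open3 Om /\ (exists p0 p1 p2, Om p0 p1 p2) /\
  forall A B : R -> R -> R -> Prop, open3 A -> open3 B ->
    (forall x0 x1 x2, Om x0 x1 x2 -> A x0 x1 x2 \/ B x0 x1 x2) ->
    (forall x0 x1 x2, Om x0 x1 x2 -> ~ (A x0 x1 x2 /\ B x0 x1 x2)) ->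
    (exists x0 x1 x2, Om x0 x1 x2 /\ A x0 x1 x2) ->
    (exists x0 x1 x2, Om x0 x1 x2 /\ B x0 x1 x2) -> False.

Definition continuous3_at (F : R -> R -> R -> R) (p0 p1 p2 : R) : Prop :=
  forall eps, 0 < eps -> exists del, 0 < del /\
    forall x0 x1 x2, ball3 p0 p1 p2 del x0 x1 x2 ->
      Rabs (F x0 x1 x2 - F p0 p1 p2) < eps.

Definition C2_on3 (Om : R -> R -> R -> Prop) (f : R -> R -> R -> R) : Prop :=
  forall p0 p1 p2, Om p0 p1 p2 ->
    continuous3_at f p0 p1 p2 /\
    (forall d, (d = d0 \/ d = d1 \/ d = d2) ->
       ex_derive (fun t => f t p1 p2) p0 /\
       ex_derive (fun t => f p0 t p2) p1 /\
       ex_derive (fun t => f p0 p1 t) p2 /\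
       continuous3_at (d f) p0 p1 p2 /\
       ex_derive (fun t => d f t p1 p2) p0 /\
       ex_derive (fun t => d f p0 t p2) p1 /\
       ex_derive (fun t => d f p0 p1 t) p2 /\
       (forall d', (d' = d0 \/ d' = d1 \/ d' = d2) ->
          continuous3_at (d' (d f)) p0 p1 p2)).

Definition e1_2 (h : R -> R -> R) : R -> R -> R :=
  fun y1 y2 => Derive (fun t => h t y2) y1.
Definition e2_2 (h : R -> R -> R) : R -> R -> R :=
  fun y1 y2 => Derive (fun t => h y1 t) y2.

Definition continuous2_at (F : R -> R -> R) (p1 p2 : R) : Prop :=
  forall eps, 0 < eps -> exists del, 0 < del /\
    forall y1 y2, Rabs (y1 - p1) < del -> Rabs (y2 - p2) < del ->
      Rabs (F y1 y2 - F p1 p2) < eps.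

Definition harmonic_on2 (V : R -> R -> Prop) (h : R -> R -> R) : Prop :=
  (forall p1 p2, V p1 p2 -> exists r, 0 < r /\
     forall y1 y2, Rabs (y1 - p1) < r -> Rabs (y2 - p2) < r -> V y1 y2) /\
  (forall p1 p2, V p1 p2 ->
    continuous2_at h p1 p2 /\
    (forall d, (d = e1_2 \/ d = e2_2) ->
       ex_derive (fun t => h t p2) p1 /\
       ex_derive (fun t => h p1 t) p2 /\
       continuous2_at (d h) p1 p2 /\
       ex_derive (fun t => d h t p2) p1 /\
       ex_derive (fun t => d h p1 t) p2 /\
       (forall d', (d' = e1_2 \/ d' = e2_2) -> continuous2_at (d' (d h)) p1 p2)) /\
    e1_2 (e1_2 h) p1 p2 + e2_2 (e2_2 h) p1 p2 = 0).

(* Main.v *)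
Require Import Defs.
From Stdlib Require Import Reals Lra FunctionalExtensionality.
From Coquelicot Require Import Coquelicot.
Import Defs.
Open Scope R_scope.

Lemma d_zero d : (d = d0 \/ d = d1 \/ d = d2) ->
  forall x0 x1 x2, d (fun _ _ _ => 0) x0 x1 x2 = 0.
Proof. intros [ -> | [ -> | -> ] ] x0 x1 x2; unfold d0, d1, d2; apply Derive_const. Qed.

Section S.
Variable F : R -> R -> R -> R.
Let G := fun a b c => qreal (F a b c).

Lemma right_eq : dbar_right G = fun a b c => Q (d0 F a b c) (d1 F a b c) (d2 F a b c) 0.
Proof.
  apply functional_extensionality; intro a;
  apply functional_extensionality; intro b;
  apply functional_extensionality; intro c.
  unfold dbar_right, qd, qadd, qmul, G, qreal, qe1, qe2; cbn [q0 q1 q2 q3].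
  rewrite !(d_zero d0), !(d_zero d1), !(d_zero d2) by tauto.
  f_equal; unfold d0, d1, d2; cbv beta; ring.
Qed.

Lemma both_eq x0 x1 x2 : dbar_both G x0 x1 x2 =
  Q (d0 (d0 F) x0 x1 x2 - d1 (d1 F) x0 x1 x2 - d2 (d2 F) x0 x1 x2)
    (d0 (d1 F) x0 x1 x2 + d1 (d0 F) x0 x1 x2)
    (d0 (d2 F) x0 x1 x2 + d2 (d0 F) x0 x1 x2)
    (d1 (d2 F) x0 x1 x2 - d2 (d1 F) x0 x1 x2).
Proof.
  unfold dbar_both, dbar_left. rewrite right_eq.
  unfold qd, qadd, qmul, qe1, qe2; cbn [q0 q1 q2 q3].
  rewrite !(d_zero d0), !(d_zero d1), !(d_zero d2) by tauto.
  f_equal; unfold d0, d1, d2; cbv beta; ring.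
Qed.
End S.

Lemma loc_of (x : R) (P : R -> Prop) e : 0 < e ->
  (forall t, Rabs (t - x) < e -> P t) -> locally x P.
Proof. intros He H. exists (mkposreal e He). intros t Ht. apply H. exact Ht. Qed.

Lemma loc2_of (x y : R) (P : R -> R -> Prop) e : 0 < e ->
  (forall u v, Rabs (u - x) < e -> Rabs (v - y) < e -> P u v) -> locally_2d P x y.
Proof. intros He H. exists (mkposreal e He). intros u v Hu Hv. apply H; assumption. Qed.

Lemma cont2_of F q1 q2 : continuity_2d_pt F q1 q2 -> continuous2_at F q1 q2.
Proof.
  intros H eps He. destruct (H (mkposreal eps He)) as [d Hd].
  exists d. split; [apply cond_pos|]. intros; apply Hd; assumption.
Qed.

Lemma cont2_to F q1 q2 : continuous2_at F q1 q2 -> continuity_2d_pt F q1 q2.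
Proof.
  intros H eps. destruct (H eps (cond_pos eps)) as [d [Hd Hd']].
  exists (mkposreal d Hd). intros; apply Hd'; assumption.
Qed.

Lemma Rabs0' a : Rabs (a - a) < 1 -> True. Proof. auto. Qed.

Lemma restr12 G p0 p1 p2 : continuous3_at G p0 p1 p2 ->
  continuity_2d_pt (fun u v => G p0 u v) p1 p2.
Proof.
  intros H eps. destruct (H eps (cond_pos eps)) as [d [Hd Hd']].
  exists (mkposreal d Hd). intros u v Hu Hv. apply Hd'.
  unfold ball3. rewrite Rminus_eq_0, Rabs_R0. simpl in *. auto.
Qed.

Lemma restr01 G p0 p1 p2 : continuous3_at G p0 p1 p2 ->
  continuity_2d_pt (fun u v => G u v p2) p0 p1.
Proof.
  intros H eps. destruct (H eps (cond_pos eps)) as [d [Hd Hd']].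
  exists (mkposreal d Hd). intros u v Hu Hv. apply Hd'.
  unfold ball3. rewrite (Rminus_eq_0 p2), Rabs_R0. simpl in *. auto.
Qed.

Lemma restr02 G p0 p1 p2 : continuous3_at G p0 p1 p2 ->
  continuity_2d_pt (fun u v => G u p1 v) p0 p2.
Proof.
  intros H eps. destruct (H eps (cond_pos eps)) as [d [Hd Hd']].
  exists (mkposreal d Hd). intros u v Hu Hv. apply Hd'.
  unfold ball3. rewrite (Rminus_eq_0 p1), Rabs_R0. simpl in *. auto.
Qed.

Lemma const1 (g : R -> R) a r :
  (forall t, Rabs (t - a) < r -> is_derive g t 0) ->
  forall b, Rabs (b - a) < r -> g b = g a.
Proof.
  intros H b Hb.
  destruct (MVT_cor4 g (fun _ => 0) a (Rabs (b - a))) with (b := b) as [c [Hc _]].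
  - intros c Hc. apply H. lra.
  - lra.
  - lra.
Qed.

Lemma der_sub (A P : R -> R) dA dP t :
  is_derive A t dA -> is_derive P t dP -> is_derive (fun s => A s - P s) t (dA - dP).
Proof. intros H1 H2. apply (is_derive_minus A P t dA dP H1 H2). Qed.

Lemma der_of (A : R -> R) t : ex_derive A t -> is_derive A t (Derive A t).
Proof. apply Derive_correct. Qed.

Section C2acc.
Variables (Om : R -> R -> R -> Prop) (F : R -> R -> R -> R).
Hypothesis HC : C2_on3 Om F.


Lemma c2_cont p0 p1 p2 : Om p0 p1 p2 -> continuous3_at F p0 p1 p2.
Proof. intro H. apply (HC _ _ _ H). Qed.
Lemma c2_ex p0 p1 p2 : Om p0 p1 p2 ->
  ex_derive (fun t => F t p1 p2) p0 /\ ex_derive (fun t => F p0 t p2) p1 /\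
  ex_derive (fun t => F p0 p1 t) p2.
Proof. intro H. destruct (HC _ _ _ H) as [_ Hd].
  destruct (Hd d0 (or_introl eq_refl)) as (A&B&C&_). auto. Qed.
Lemma c2_d d p0 p1 p2 : (d = d0 \/ d = d1 \/ d = d2) -> Om p0 p1 p2 ->
  continuous3_at (d F) p0 p1 p2 /\
  ex_derive (fun t => d F t p1 p2) p0 /\ ex_derive (fun t => d F p0 t p2) p1 /\
  ex_derive (fun t => d F p0 p1 t) p2 /\
  (forall d', (d' = d0 \/ d' = d1 \/ d' = d2) -> continuous3_at (d' (d F)) p0 p1 p2).
Proof. intros Hdd H. destruct (HC _ _ _ H) as [_ Hd].
  destruct (Hd d Hdd) as (A&B&C&D&E&G&I&J). auto. Qed.
End C2acc.

Section Pointwise.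
Variables (Om : R -> R -> R -> Prop) (F : R -> R -> R -> R).
Hypothesis HO : open3 Om.
Hypothesis HC : C2_on3 Om F.
Hypothesis HE : forall x0 x1 x2, Om x0 x1 x2 ->
     dbar_both (fun a b c => qreal (F a b c)) x0 x1 x2 = qzero.

Lemma schw01 x0 x1 x2 : Om x0 x1 x2 -> d0 (d1 F) x0 x1 x2 = d1 (d0 F) x0 x1 x2.
Proof.
  intro Hx. destruct (HO _ _ _ Hx) as [r [Hr Hb]].
  apply (Schwarz (fun u v => F u v x2) x0 x1).
  - apply (loc2_of _ _ _ r Hr). intros u v Hu Hv.
    assert (Hom : Om u v x2).
    { apply Hb. unfold ball3. rewrite Rminus_eq_0, Rabs_R0. auto. }
    destruct (c2_ex Om F HC _ _ _ Hom) as (A&B&_).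
    destruct (c2_d Om F HC d1 _ _ _ ltac:(tauto) Hom) as (_&C&_).
    destruct (c2_d Om F HC d0 _ _ _ ltac:(tauto) Hom) as (_&_&D&_).
    repeat split; assumption.
  - destruct (c2_d Om F HC d1 _ _ _ ltac:(tauto) Hx) as (_&_&_&_&C).
    exact (restr01 _ _ _ _ (C d0 ltac:(tauto))).
  - destruct (c2_d Om F HC d0 _ _ _ ltac:(tauto) Hx) as (_&_&_&_&C).
    exact (restr01 _ _ _ _ (C d1 ltac:(tauto))).
Qed.

Lemma schw02 x0 x1 x2 : Om x0 x1 x2 -> d0 (d2 F) x0 x1 x2 = d2 (d0 F) x0 x1 x2.
Proof.
  intro Hx. destruct (HO _ _ _ Hx) as [r [Hr Hb]].
  apply (Schwarz (fun u v => F u x1 v) x0 x2).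
  - apply (loc2_of _ _ _ r Hr). intros u v Hu Hv.
    assert (Hom : Om u x1 v).
    { apply Hb. unfold ball3. rewrite (Rminus_eq_0 x1), Rabs_R0. auto. }
    destruct (c2_ex Om F HC _ _ _ Hom) as (A&_&B).
    destruct (c2_d Om F HC d2 _ _ _ ltac:(tauto) Hom) as (_&C&_).
    destruct (c2_d Om F HC d0 _ _ _ ltac:(tauto) Hom) as (_&_&_&D&_).
    repeat split; assumption.
  - destruct (c2_d Om F HC d2 _ _ _ ltac:(tauto) Hx) as (_&_&_&_&C).
    exact (restr02 _ _ _ _ (C d0 ltac:(tauto))).
  - destruct (c2_d Om F HC d0 _ _ _ ltac:(tauto) Hx) as (_&_&_&_&C).
    exact (restr02 _ _ _ _ (C d2 ltac:(tauto))).
Qed.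

Lemma eqs x0 x1 x2 : Om x0 x1 x2 ->
  d1 (d0 F) x0 x1 x2 = 0 /\ d2 (d0 F) x0 x1 x2 = 0 /\
  d0 (d1 F) x0 x1 x2 = 0 /\ d0 (d2 F) x0 x1 x2 = 0 /\
  d0 (d0 F) x0 x1 x2 = d1 (d1 F) x0 x1 x2 + d2 (d2 F) x0 x1 x2.
Proof.
  intro Hx. pose proof (HE _ _ _ Hx) as H. rewrite both_eq in H.
  pose proof (f_equal q0 H) as E0. pose proof (f_equal q1 H) as E1.
  pose proof (f_equal q2 H) as E2. simpl in E0, E1, E2.
  pose proof (schw01 _ _ _ Hx). pose proof (schw02 _ _ _ Hx).
  repeat split; lra.
Qed.
End Pointwise.

Section Cube.
Variables (Om : R -> R -> R -> Prop) (F : R -> R -> R -> R).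
Hypothesis HC : C2_on3 Om F.
Hypothesis HZ : forall x0 x1 x2, Om x0 x1 x2 ->
  d1 (d0 F) x0 x1 x2 = 0 /\ d2 (d0 F) x0 x1 x2 = 0 /\
  d0 (d1 F) x0 x1 x2 = 0 /\ d0 (d2 F) x0 x1 x2 = 0 /\
  d0 (d0 F) x0 x1 x2 = d1 (d1 F) x0 x1 x2 + d2 (d2 F) x0 x1 x2.
Variables (p0 p1 p2 r : R).
Hypothesis Hr : 0 < r.
Hypothesis Hb : forall x0 x1 x2, ball3 p0 p1 p2 r x0 x1 x2 -> Om x0 x1 x2.

Lemma inb x0 x1 x2 : Rabs (x0 - p0) < r -> Rabs (x1 - p1) < r -> Rabs (x2 - p2) < r ->
  Om x0 x1 x2.
Proof. intros; apply Hb; unfold ball3; auto. Qed.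

Lemma Rabs_self a : Rabs (a - a) < r.
Proof. rewrite Rminus_eq_0, Rabs_R0; exact Hr. Qed.

Lemma loc_in x a : Rabs (x - a) < r -> locally x (fun t => Rabs (t - a) < r).
Proof.
  intro H. apply (loc_of _ _ (r - Rabs (x - a))); [lra|].
  intros t Ht. pose proof (Rabs_triang (t - x) (x - a)).
  replace (t - x + (x - a)) with (t - a) in H0 by ring. lra.
Qed.

Lemma C1 x0 x1 x2 : Rabs (x0 - p0) < r -> Rabs (x1 - p1) < r -> Rabs (x2 - p2) < r ->
  d0 F x0 x1 x2 = d0 F x0 p1 p2.
Proof.
  intros H0 H1 H2.
  transitivity (d0 F x0 p1 x2).
  - apply (const1 (fun t => d0 F x0 t x2) p1 r); [|exact H1].
    intros t Ht. pose proof (inb x0 t x2 H0 Ht H2) as Hom.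
    destruct (c2_d Om F HC d0 _ _ _ ltac:(tauto) Hom) as (_&_&E&_).
    pose proof (der_of _ _ E) as D. change (is_derive (fun s => d0 F x0 s x2) t (d1 (d0 F) x0 t x2)) in D.
    rewrite (proj1 (HZ _ _ _ Hom)) in D. exact D.
  - apply (const1 (fun t => d0 F x0 p1 t) p2 r); [|exact H2].
    intros t Ht. pose proof (inb x0 p1 t H0 (Rabs_self _) Ht) as Hom.
    destruct (c2_d Om F HC d0 _ _ _ ltac:(tauto) Hom) as (_&_&_&E&_).
    pose proof (der_of _ _ E) as D. change (is_derive (fun s => d0 F x0 p1 s) t (d2 (d0 F) x0 p1 t)) in D.
    rewrite (proj1 (proj2 (HZ _ _ _ Hom))) in D. exact D.
Qed.

Lemma Csplit x0 x1 x2 : Rabs (x0 - p0) < r -> Rabs (x1 - p1) < r -> Rabs (x2 - p2) < r ->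
  F x0 x1 x2 = F x0 p1 p2 + F p0 x1 x2 - F p0 p1 p2.
Proof.
  intros H0 H1 H2.
  assert (E : (fun t => F t x1 x2 - F t p1 p2) x0 = (fun t => F t x1 x2 - F t p1 p2) p0).
  { apply (const1 (fun t => F t x1 x2 - F t p1 p2) p0 r); [|exact H0].
    intros t Ht. pose proof (inb t x1 x2 Ht H1 H2) as Hom.
    pose proof (inb t p1 p2 Ht (Rabs_self _) (Rabs_self _)) as Hom'.
    replace 0 with (Derive (fun s => F s x1 x2) t - Derive (fun s => F s p1 p2) t).
    - apply der_sub; apply der_of; [apply (c2_ex Om F HC _ _ _ Hom)|apply (c2_ex Om F HC _ _ _ Hom')].
    - change (d0 F t x1 x2 - d0 F t p1 p2 = 0). rewrite (C1 t x1 x2 Ht H1 H2). ring. }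
  simpl in E. lra.
Qed.

Lemma C3 x0 x1 x2 : Rabs (x0 - p0) < r -> Rabs (x1 - p1) < r -> Rabs (x2 - p2) < r ->
  d1 F x0 x1 x2 = d1 F p0 x1 x2.
Proof.
  intros H0 H1 H2.
  apply (const1 (fun t => d1 F t x1 x2) p0 r); [|exact H0].
  intros t Ht. pose proof (inb t x1 x2 Ht H1 H2) as Hom.
  destruct (c2_d Om F HC d1 _ _ _ ltac:(tauto) Hom) as (_&E&_).
  pose proof (der_of _ _ E) as D. change (is_derive (fun s => d1 F s x1 x2) t (d0 (d1 F) t x1 x2)) in D.
  destruct (HZ _ _ _ Hom) as (_&_&Z&_). rewrite Z in D. exact D.
Qed.

Lemma C4 x0 x1 x2 : Rabs (x0 - p0) < r -> Rabs (x1 - p1) < r -> Rabs (x2 - p2) < r ->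
  d2 F x0 x1 x2 = d2 F p0 x1 x2.
Proof.
  intros H0 H1 H2.
  apply (const1 (fun t => d2 F t x1 x2) p0 r); [|exact H0].
  intros t Ht. pose proof (inb t x1 x2 Ht H1 H2) as Hom.
  destruct (c2_d Om F HC d2 _ _ _ ltac:(tauto) Hom) as (_&E&_).
  pose proof (der_of _ _ E) as D. change (is_derive (fun s => d2 F s x1 x2) t (d0 (d2 F) t x1 x2)) in D.
  destruct (HZ _ _ _ Hom) as (_&_&_&Z&_). rewrite Z in D. exact D.
Qed.

Lemma D0 x0 x1 x2 : Rabs (x0 - p0) < r -> Rabs (x1 - p1) < r -> Rabs (x2 - p2) < r ->
  d0 (d0 F) x0 x1 x2 = d0 (d0 F) x0 p1 p2.
Proof.
  intros H0 H1 H2. unfold d0 at 1 3. apply Derive_ext_loc.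
  generalize (loc_in _ _ H0). apply filter_imp. intros t Ht. apply C1; auto.
Qed.

Lemma D1 x0 x1 x2 : Rabs (x0 - p0) < r -> Rabs (x1 - p1) < r -> Rabs (x2 - p2) < r ->
  d1 (d1 F) x0 x1 x2 = d1 (d1 F) p0 x1 x2.
Proof.
  intros H0 H1 H2. unfold d1 at 1 3. apply Derive_ext_loc.
  generalize (loc_in _ _ H1). apply filter_imp. intros t Ht. apply C3; auto.
Qed.

Lemma D2 x0 x1 x2 : Rabs (x0 - p0) < r -> Rabs (x1 - p1) < r -> Rabs (x2 - p2) < r ->
  d2 (d2 F) x0 x1 x2 = d2 (d2 F) p0 x1 x2.
Proof.
  intros H0 H1 H2. unfold d2 at 1 3. apply Derive_ext_loc.
  generalize (loc_in _ _ H2). apply filter_imp. intros t Ht. apply C4; auto.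
Qed.

Definition K := d0 (d0 F) p0 p1 p2.

Lemma Lap x0 x1 x2 : Rabs (x0 - p0) < r -> Rabs (x1 - p1) < r -> Rabs (x2 - p2) < r ->
  d0 (d0 F) x0 p1 p2 = d1 (d1 F) p0 x1 x2 + d2 (d2 F) p0 x1 x2.
Proof.
  intros H0 H1 H2. pose proof (HZ _ _ _ (inb _ _ _ H0 H1 H2)) as (_&_&_&_&E).
  rewrite <- (D0 _ _ _ H0 H1 H2), E, (D1 _ _ _ H0 H1 H2), (D2 _ _ _ H0 H1 H2). ring.
Qed.

Lemma LapK x1 x2 : Rabs (x1 - p1) < r -> Rabs (x2 - p2) < r ->
  d1 (d1 F) p0 x1 x2 + d2 (d2 F) p0 x1 x2 = K.
Proof.
  intros H1 H2. rewrite <- (Lap p0 x1 x2 (Rabs_self _) H1 H2). unfold K.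
  rewrite (Lap p0 p1 p2 (Rabs_self _) (Rabs_self _) (Rabs_self _)). reflexivity.
Qed.

Lemma K0 x0 : Rabs (x0 - p0) < r -> d0 (d0 F) x0 p1 p2 = K.
Proof.
  intro H0. rewrite (Lap x0 p1 p2 H0 (Rabs_self _) (Rabs_self _)).
  apply LapK; apply Rabs_self.
Qed.

Definition a1 := d0 F p0 p1 p2.

Lemma A1 t : Rabs (t - p0) < r -> d0 F t p1 p2 = a1 + K * (t - p0).
Proof.
  intro Ht.
  assert (E : (fun s => d0 F s p1 p2 - K * (s - p0)) t = (fun s => d0 F s p1 p2 - K * (s - p0)) p0).
  { apply (const1 (fun s => d0 F s p1 p2 - K * (s - p0)) p0 r); [|exact Ht].
    intros s Hs. pose proof (inb s p1 p2 Hs (Rabs_self _) (Rabs_self _)) as Hom.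
    replace 0 with (Derive (fun u => d0 F u p1 p2) s - K).
    - apply der_sub; [apply der_of; apply (c2_d Om F HC d0 _ _ _ ltac:(tauto) Hom)|].
      auto_derive; auto; ring.
    - change (d0 (d0 F) s p1 p2 - K = 0). rewrite (K0 s Hs). ring. }
  simpl in E. unfold a1. lra.
Qed.

Lemma A0 t : Rabs (t - p0) < r ->
  F t p1 p2 = F p0 p1 p2 + K / 2 * (t - p0) ^ 2 + a1 * (t - p0).
Proof.
  intro Ht.
  assert (E : (fun s => F s p1 p2 - (K / 2 * (s - p0) ^ 2 + a1 * (s - p0))) t =
              (fun s => F s p1 p2 - (K / 2 * (s - p0) ^ 2 + a1 * (s - p0))) p0).
  { apply (const1 (fun s => F s p1 p2 - (K / 2 * (s - p0) ^ 2 + a1 * (s - p0))) p0 r); [|exact Ht].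
    intros s Hs. pose proof (inb s p1 p2 Hs (Rabs_self _) (Rabs_self _)) as Hom.
    replace 0 with (Derive (fun u => F u p1 p2) s - (K * (s - p0) + a1)).
    - apply der_sub; [apply der_of; apply (c2_ex Om F HC _ _ _ Hom)|].
      auto_derive; auto; field.
    - change (d0 F s p1 p2 - (K * (s - p0) + a1) = 0). rewrite (A1 s Hs). ring. }
  simpl in E. lra.
Qed.

Definition Sq y1 y2 := Rabs (y1 - p1) < r /\ Rabs (y2 - p2) < r.
Definition hh y1 y2 := F p0 y1 y2 - K / 4 * (y1 * y1 + y2 * y2).
Definition H1 y1 y2 := d1 F p0 y1 y2 - K / 2 * y1.
Definition H2 y1 y2 := d2 F p0 y1 y2 - K / 2 * y2.

Lemma Sq_om y1 y2 : Sq y1 y2 -> Om p0 y1 y2.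
Proof. intros [A B]. apply inb; auto. apply Rabs_self. Qed.

Lemma e1_ext (G H : R -> R -> R) (q1 q2 : R) : (forall y1 y2, Sq y1 y2 -> G y1 y2 = H y1 y2) -> Sq q1 q2 ->
  e1_2 G q1 q2 = e1_2 H q1 q2.
Proof.
  intros E [A B]. unfold e1_2. apply Derive_ext_loc.
  generalize (loc_in _ _ A). apply filter_imp. intros t Ht. apply E. split; auto.
Qed.
Lemma e2_ext (G H : R -> R -> R) (q1 q2 : R) : (forall y1 y2, Sq y1 y2 -> G y1 y2 = H y1 y2) -> Sq q1 q2 ->
  e2_2 G q1 q2 = e2_2 H q1 q2.
Proof.
  intros E [A B]. unfold e2_2. apply Derive_ext_loc.
  generalize (loc_in _ _ B). apply filter_imp. intros t Ht. apply E. split; auto.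
Qed.
Lemma exd1_ext (G H : R -> R -> R) (q1 q2 : R) : (forall y1 y2, Sq y1 y2 -> G y1 y2 = H y1 y2) -> Sq q1 q2 ->
  ex_derive (fun t => H t q2) q1 -> ex_derive (fun t => G t q2) q1.
Proof.
  intros E [A B]. apply ex_derive_ext_loc.
  generalize (loc_in _ _ A). apply filter_imp. intros t Ht. symmetry. apply E. split; auto.
Qed.
Lemma exd2_ext (G H : R -> R -> R) (q1 q2 : R) : (forall y1 y2, Sq y1 y2 -> G y1 y2 = H y1 y2) -> Sq q1 q2 ->
  ex_derive (fun t => H q1 t) q2 -> ex_derive (fun t => G q1 t) q2.
Proof.
  intros E [A B]. apply ex_derive_ext_loc.
  generalize (loc_in _ _ B). apply filter_imp. intros t Ht. symmetry. apply E. split; auto.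
Qed.
Lemma cont_ext (G H : R -> R -> R) (q1 q2 : R) : (forall y1 y2, Sq y1 y2 -> G y1 y2 = H y1 y2) -> Sq q1 q2 ->
  continuous2_at H q1 q2 -> continuous2_at G q1 q2.
Proof.
  intros E [A B] C. apply cont2_of. apply (continuity_2d_pt_ext_loc H G).
  - apply (loc2_of _ _ _ (Rmin (r - Rabs (q1 - p1)) (r - Rabs (q2 - p2)))).
    + apply Rmin_glb_lt; lra.
    + intros u v Hu Hv. symmetry. apply E.
      pose proof (Rmin_l (r - Rabs (q1 - p1)) (r - Rabs (q2 - p2))).
      pose proof (Rmin_r (r - Rabs (q1 - p1)) (r - Rabs (q2 - p2))).
      pose proof (Rabs_triang (u - q1) (q1 - p1)).
      pose proof (Rabs_triang (v - q2) (q2 - p2)).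
      replace (u - q1 + (q1 - p1)) with (u - p1) in * by ring.
      replace (v - q2 + (q2 - p2)) with (v - p2) in * by ring.
      split; lra.
  - apply cont2_to. exact C.
Qed.

Lemma contP (D : R -> R -> R -> R) (P : R -> R -> R) (q1 q2 : R) : continuous3_at D p0 q1 q2 -> continuity_2d_pt P q1 q2 ->
  continuous2_at (fun y1 y2 => D p0 y1 y2 - P y1 y2) q1 q2.
Proof.
  intros A B. apply cont2_of. apply (continuity_2d_pt_minus (fun u v => D p0 u v) P).
  - apply restr12. exact A.
  - exact B.
Qed.

Lemma hd1 y1 y2 : Sq y1 y2 -> is_derive (fun t => hh t y2) y1 (H1 y1 y2).
Proof.
  intro Hy. pose proof (Sq_om _ _ Hy) as Hom. unfold hh, H1.
  apply der_sub. - apply der_of. apply (c2_ex Om F HC _ _ _ Hom).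
  - auto_derive; auto; field.
Qed.
Lemma hd2 y1 y2 : Sq y1 y2 -> is_derive (fun t => hh y1 t) y2 (H2 y1 y2).
Proof.
  intro Hy. pose proof (Sq_om _ _ Hy) as Hom. unfold hh, H2.
  apply der_sub. - apply der_of. apply (c2_ex Om F HC _ _ _ Hom).
  - auto_derive; auto; field.
Qed.
Lemma H1d1 y1 y2 : Sq y1 y2 -> is_derive (fun t => H1 t y2) y1 (d1 (d1 F) p0 y1 y2 - K / 2).
Proof.
  intro Hy. pose proof (Sq_om _ _ Hy) as Hom. unfold H1.
  apply der_sub. - apply der_of. apply (c2_d Om F HC d1 _ _ _ ltac:(tauto) Hom).
  - auto_derive; auto; field.
Qed.
Lemma H1d2 y1 y2 : Sq y1 y2 -> is_derive (fun t => H1 y1 t) y2 (d2 (d1 F) p0 y1 y2 - 0).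
Proof.
  intro Hy. pose proof (Sq_om _ _ Hy) as Hom. unfold H1.
  apply der_sub. - apply der_of. apply (c2_d Om F HC d1 _ _ _ ltac:(tauto) Hom).
  - auto_derive; auto; field.
Qed.
Lemma H2d1 y1 y2 : Sq y1 y2 -> is_derive (fun t => H2 t y2) y1 (d1 (d2 F) p0 y1 y2 - 0).
Proof.
  intro Hy. pose proof (Sq_om _ _ Hy) as Hom. unfold H2.
  apply der_sub. - apply der_of. apply (c2_d Om F HC d2 _ _ _ ltac:(tauto) Hom).
  - auto_derive; auto; field.
Qed.
Lemma H2d2 y1 y2 : Sq y1 y2 -> is_derive (fun t => H2 y1 t) y2 (d2 (d2 F) p0 y1 y2 - K / 2).
Proof.
  intro Hy. pose proof (Sq_om _ _ Hy) as Hom. unfold H2.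
  apply der_sub. - apply der_of. apply (c2_d Om F HC d2 _ _ _ ltac:(tauto) Hom).
  - auto_derive; auto; field.
Qed.

Lemma E1 y1 y2 : Sq y1 y2 -> e1_2 hh y1 y2 = H1 y1 y2.
Proof. intro Hy. apply is_derive_unique. apply hd1; auto. Qed.
Lemma E2 y1 y2 : Sq y1 y2 -> e2_2 hh y1 y2 = H2 y1 y2.
Proof. intro Hy. apply is_derive_unique. apply hd2; auto. Qed.
Lemma E11 y1 y2 : Sq y1 y2 -> e1_2 (e1_2 hh) y1 y2 = d1 (d1 F) p0 y1 y2 - K / 2.
Proof. intro Hy. rewrite (e1_ext _ H1 _ _ E1 Hy). apply is_derive_unique. apply H1d1; auto. Qed.
Lemma E12 y1 y2 : Sq y1 y2 -> e2_2 (e1_2 hh) y1 y2 = d2 (d1 F) p0 y1 y2 - 0.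
Proof. intro Hy. rewrite (e2_ext _ H1 _ _ E1 Hy). apply is_derive_unique. apply H1d2; auto. Qed.
Lemma E21 y1 y2 : Sq y1 y2 -> e1_2 (e2_2 hh) y1 y2 = d1 (d2 F) p0 y1 y2 - 0.
Proof. intro Hy. rewrite (e1_ext _ H2 _ _ E2 Hy). apply is_derive_unique. apply H2d1; auto. Qed.
Lemma E22 y1 y2 : Sq y1 y2 -> e2_2 (e2_2 hh) y1 y2 = d2 (d2 F) p0 y1 y2 - K / 2.
Proof. intro Hy. rewrite (e2_ext _ H2 _ _ E2 Hy). apply is_derive_unique. apply H2d2; auto. Qed.

Lemma cconst c q1 q2 : continuity_2d_pt (fun _ _ => c) q1 q2.
Proof. apply continuity_2d_pt_const. Qed.

Lemma harm : harmonic_on2 Sq hh.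
Proof.
  split.
  { intros q1 q2 [A B]. exists (Rmin (r - Rabs (q1 - p1)) (r - Rabs (q2 - p2))). split.
    - apply Rmin_glb_lt; lra.
    - intros u v Hu Hv.
      pose proof (Rmin_l (r - Rabs (q1 - p1)) (r - Rabs (q2 - p2))).
      pose proof (Rmin_r (r - Rabs (q1 - p1)) (r - Rabs (q2 - p2))).
      pose proof (Rabs_triang (u - q1) (q1 - p1)).
      pose proof (Rabs_triang (v - q2) (q2 - p2)).
      replace (u - q1 + (q1 - p1)) with (u - p1) in * by ring.
      replace (v - q2 + (q2 - p2)) with (v - p2) in * by ring.
      split; lra. }
  intros q1 q2 Hq. pose proof (Sq_om _ _ Hq) as Hom.
  split; [|split].
  - unfold hh. apply (contP F (fun y1 y2 => K / 4 * (y1 * y1 + y2 * y2))).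
    + apply (c2_cont Om F HC _ _ _ Hom).
    + apply (continuity_2d_pt_mult (fun _ _ => K / 4) (fun y1 y2 => y1 * y1 + y2 * y2)).
      * apply cconst.
      * apply (continuity_2d_pt_plus (fun y1 y2 => y1 * y1) (fun y1 y2 => y2 * y2)).
        -- apply (continuity_2d_pt_mult (fun y1 y2 => y1) (fun y1 y2 => y1)); apply continuity_2d_pt_id1.
        -- apply (continuity_2d_pt_mult (fun y1 y2 => y2) (fun y1 y2 => y2)); apply continuity_2d_pt_id2.
  - intros d [-> | ->].
    + destruct (c2_d Om F HC d1 _ _ _ ltac:(tauto) Hom) as (Cd&_&_&_&Cdd).
      split; [eexists; apply hd1; auto|].
      split; [eexists; apply hd2; auto|].
      split.
      { apply (cont_ext _ H1 _ _ E1 Hq). unfold H1.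
        apply (contP (d1 F) (fun y1 y2 => K / 2 * y1)); auto.
        apply (continuity_2d_pt_mult (fun _ _ => K / 2) (fun y1 y2 => y1)).
        apply cconst. apply continuity_2d_pt_id1. }
      split; [apply (exd1_ext _ H1 _ _ E1 Hq); eexists; apply H1d1; auto|].
      split; [apply (exd2_ext _ H1 _ _ E1 Hq); eexists; apply H1d2; auto|].
      intros d' [-> | ->].
      * apply (cont_ext _ (fun y1 y2 => d1 (d1 F) p0 y1 y2 - K / 2) _ _ E11 Hq).
        apply (contP (d1 (d1 F)) (fun _ _ => K / 2)). apply Cdd; tauto. apply cconst.
      * apply (cont_ext _ (fun y1 y2 => d2 (d1 F) p0 y1 y2 - 0) _ _ E12 Hq).
        apply (contP (d2 (d1 F)) (fun _ _ => 0)). apply Cdd; tauto. apply cconst.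
    + destruct (c2_d Om F HC d2 _ _ _ ltac:(tauto) Hom) as (Cd&_&_&_&Cdd).
      split; [eexists; apply hd1; auto|].
      split; [eexists; apply hd2; auto|].
      split.
      { apply (cont_ext _ H2 _ _ E2 Hq). unfold H2.
        apply (contP (d2 F) (fun y1 y2 => K / 2 * y2)); auto.
        apply (continuity_2d_pt_mult (fun _ _ => K / 2) (fun y1 y2 => y2)).
        apply cconst. apply continuity_2d_pt_id2. }
      split; [apply (exd1_ext _ H2 _ _ E2 Hq); eexists; apply H2d1; auto|].
      split; [apply (exd2_ext _ H2 _ _ E2 Hq); eexists; apply H2d2; auto|].
      intros d' [-> | ->].
      * apply (cont_ext _ (fun y1 y2 => d1 (d2 F) p0 y1 y2 - 0) _ _ E21 Hq).
        apply (contP (d1 (d2 F)) (fun _ _ => 0)). apply Cdd; tauto. apply cconst.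
      * apply (cont_ext _ (fun y1 y2 => d2 (d2 F) p0 y1 y2 - K / 2) _ _ E22 Hq).
        apply (contP (d2 (d2 F)) (fun _ _ => K / 2)). apply Cdd; tauto. apply cconst.
  - rewrite (E11 _ _ Hq), (E22 _ _ Hq). destruct Hq as [A B].
    pose proof (LapK _ _ A B). lra.
Qed.

Lemma repr x0 x1 x2 : ball3 p0 p1 p2 r x0 x1 x2 ->
  F x0 x1 x2 = K / 4 * (2 * x0 ^ 2 + x1 ^ 2 + x2 ^ 2) + (a1 - K * p0) * x0
               + (K / 2 * p0 ^ 2 - a1 * p0) + hh x1 x2.
Proof.
  intros (A&B&C). rewrite (Csplit _ _ _ A B C), (A0 _ A). unfold hh. field.
Qed.
End Cube.

Theorem proposition2p5 (Om : R -> R -> R -> Prop) (f0 : R -> R -> R -> R) :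
  domain3 Om ->
  C2_on3 Om f0 ->
  (forall x0 x1 x2, Om x0 x1 x2 ->
     dbar_both (fun a b c => qreal (f0 a b c)) x0 x1 x2 = qzero) ->
  forall p0 p1 p2, Om p0 p1 p2 ->
    exists r : R, 0 < r /\
      (forall x0 x1 x2, ball3 p0 p1 p2 r x0 x1 x2 -> Om x0 x1 x2) /\
      exists (c0 c1 c2 : R) (h : R -> R -> R),
        harmonic_on2 (fun y1 y2 => Rabs (y1 - p1) < r /\ Rabs (y2 - p2) < r) h /\
        forall x0 x1 x2, ball3 p0 p1 p2 r x0 x1 x2 ->
          f0 x0 x1 x2 =
            c0 * (2 * x0 ^ 2 + x1 ^ 2 + x2 ^ 2) + c1 * x0 + c2 + h x1 x2.
Proof.
  intros [HO _] HC HE p0 p1 p2 Hp.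
  destruct (HO _ _ _ Hp) as [r [Hr Hb]].
  pose proof (eqs Om f0 HO HC HE) as HZ.
  exists r. split; [exact Hr|]. split; [exact Hb|].
  exists (K f0 p0 p1 p2 / 4), (a1 f0 p0 p1 p2 - K f0 p0 p1 p2 * p0),
    (K f0 p0 p1 p2 / 2 * p0 ^ 2 - a1 f0 p0 p1 p2 * p0), (hh f0 p0 p1 p2).
  split.
  - exact (harm Om f0 HC HZ p0 p1 p2 r Hr Hb).
  - intros x0 x1 x2 Hx. exact (repr Om f0 HC HZ p0 p1 p2 r Hr Hb x0 x1 x2 Hx).
Qed.
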